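(* Let $d,N\in\mathbb{N}$, $h>0$, $\rho\in\mathbb{R}^{d\times d}$ diagonal, $L_d:\mathbb{R}^d\times\mathbb{R}^d\to\mathbb{R}$ differentiable, and $\alpha=1/2$. Define $f^-_{L_d},f^+_{L_d}:\mathbb{R}^d\times\mathbb{R}^d\to\mathbb{R}^d$ by $f^-_{L_d}(u,w)=0$ and $f^+_{L_d}(u,w)=-\rho(w-u)$. Then for any $\{x_k\}_{k=0}^N\subset\mathbb{R}^d$ and $k\in\{1,\dots,N-1\}$, the equation $$D_1L_d(x_k,x_{k+1})+D_2L_d(x_{k-1},x_k)-h\,\rho\,\Delta^{1/2}_-\Delta^{1/2}_-x_k=0$$ holds if and only if the forced discrete Euler–Lagrange equation $$D_1L_d(x_k,x_{k+1})+D_2L_d(x_{k-1},x_k)+f^-_{L_d}(x_k,x_{k+1})+f^+_{L_d}(x_{k-1},x_k)=0$$ holds.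
   Context: $D_1,D_2$ denote partial derivatives of $L_d$ with respect to its first and second arguments. For a sequence $\{z_k\}_{k=0}^N$, $\Delta^\alpha_-z_k:=h^{-\alpha}\sum_{n=0}^{k}\alpha_n z_{k-n}$, where $\alpha_0:=1$ and $\alpha_n:=\frac{-\alpha(1-\alpha)(2-\alpha)\cdots(n-1-\alpha)}{n!}$ for $n\ge1$; $\Delta^\alpha_-\Delta^\alpha_-x_k$ denotes $\Delta^\alpha_-$ applied to the sequence $\{\Delta^\alpha_-x_j\}_{j=0}^N$ at index $k$ (componentwise on $\mathbb{R}^d$). *)

(* Defs.v *)
From HB Require Import structures.
From mathcomp Require Import all_boot all_order all_algebra.
From mathcomp Require Import all_classical all_reals all_analysis.
Set Implicit Arguments. Unset Strict Implicit. Unset Printing Implicit Defensive.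
Import Order.TTheory GRing.Theory Num.Theory.
Import numFieldNormedType.Exports.
Local Open Scope ring_scope.

Section Defs.
Variable R : realType.
Variable d : nat.

Definition D1 (L : 'cV[R]_d * 'cV[R]_d -> R) (u w : 'cV[R]_d) : 'cV[R]_d :=
  \col_j (derive L (u, w) (delta_mx j 0, 0)).
Definition D2 (L : 'cV[R]_d * 'cV[R]_d -> R) (u w : 'cV[R]_d) : 'cV[R]_d :=
  \col_j (derive L (u, w) (0, delta_mx j 0)).

Definition alpha_coef (a : R) (n : nat) : R :=
  if n == 0%N then 1
  else - a * (\prod_(1 <= i < n) (i%:R - a)) / (n`!)%:R.

Definition frac_diff (a h : R) (z : nat -> 'cV[R]_d) (k : nat) : 'cV[R]_d :=
  h `^ (- a) *: \sum_(0 <= n < k.+1) alpha_coef a n *: z (k - n)%N.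

Definition f_minus (rho : 'M[R]_d) (u w : 'cV[R]_d) : 'cV[R]_d := 0.
Definition f_plus (rho : 'M[R]_d) (u w : 'cV[R]_d) : 'cV[R]_d :=
  - (rho *m (w - u)).
End Defs.

(* Main.v *)
Set Warnings "-all".
Require Import Defs.
From HB Require Import structures.
From mathcomp Require Import all_boot all_order all_algebra.
From mathcomp Require Import all_classical all_reals all_analysis.
From mathcomp Require Import ring lra.
Import Order.TTheory GRing.Theory Num.Theory.
Import numFieldNormedType.Exports.
Local Open Scope ring_scope.
From mathcomp Require Import zify.

Section Aux.
Variable R : realType.
Notation A := (@alpha_coef R (1/2)).

Lemma A_rec n : A n.+1 * n.+1%:R = A n * (n%:R - 1/2).
Proof.
rewrite /alpha_coef /=.
case: n => [|n] /=.
  rewrite big_geq //; have ->: (1`!)%:R = 1 :> R by [].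
  rewrite divr1. ring.
rewrite big_nat_recr //= factS natrM.
have h1 : (n.+1`!)%:R != 0 :> R by rewrite pnatr_eq0 -lt0n fact_gt0.
have h2 : (n.+2)%:R != 0 :> R by rewrite pnatr_eq0.
field; rewrite h1 /= -(natrD R 2 n) pnatr_eq0 //.
Qed.

Definition cc j := \sum_(0 <= n < j.+1) A n * A (j - n).

Definition SS j := \sum_(0 <= n < j.+1) n%:R * A n * A (j - n).

Lemma SS_sym j : 2 * SS j = j%:R * cc j.
Proof.
rewrite mulr2n mulrDl mul1r {2}/SS big_nat_rev /= add0n.
rewrite /SS /cc -big_split /= mulr_sumr; apply: eq_big_nat => n /andP[_ hn].
rewrite subSS.
have -> : (j - (j - n) = n)%N by rewrite subKn.
rewrite natrB //; ring.
Qed.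

Lemma cc_rec j : cc j.+1 * j.+1%:R = cc j * (j%:R - 1).
Proof.
have e : cc j.+1 * j.+1%:R = 2 * SS j.+1.
  by rewrite SS_sym mulrC.
rewrite e /SS big_nat_recl // mul0r mul0r add0r.
have -> : \sum_(0 <= i < j.+1) i.+1%:R * A i.+1 * A (j.+1 - i.+1) =
          \sum_(0 <= i < j.+1) (i%:R - 1/2) * A i * A (j - i).
  apply: eq_bigr => i _; rewrite subSS (mulrC (i.+1)%:R) A_rec; ring.
have -> : \sum_(0 <= i < j.+1) (i%:R - 1/2) * A i * A (j - i) = SS j - cc j / 2.
  rewrite /SS /cc mulr_suml -sumrB; apply: eq_bigr => i _; ring.
by rewrite mulrBr SS_sym; field.
Qed.

Lemma cc0 : cc 0 = 1.
Proof. by rewrite /cc big_nat1 /alpha_coef /= mulr1. Qed.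

Lemma cc1 : cc 1 = -1.
Proof.
have := cc_rec 0; rewrite cc0 mulr1 => ->; ring.
Qed.

Lemma ccS2 j : cc j.+2 = 0.
Proof.
elim: j => [|j IH].
  have := cc_rec 1; rewrite cc1 subrr mulr0 => /eqP.
  by rewrite mulf_eq0 pnatr_eq0 orbF => /eqP.
have := cc_rec j.+2; rewrite IH mul0r => /eqP.
by rewrite mulf_eq0 pnatr_eq0 orbF => /eqP.
Qed.

End Aux.

Lemma tri (V : zmodType) (G : nat -> nat -> V) k :
 \sum_(0<=n<k.+1) \sum_(0<=m<(k-n)%N.+1) G n m = \sum_(0<=j<k.+1) \sum_(0<=n<j.+1) G n (j-n)%N.
Proof.
elim: k => [|k IH]; first by rewrite !big_nat1.
rewrite [LHS](big_nat_recr k.+1 0) //= [RHS](big_nat_recr k.+1 0) //= -IH subnn big_nat1.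
rewrite [X in _ = _ + X](big_nat_recr k.+1 0) //= subnn addrA; congr (_ + _).
have -> : \sum_(0 <= i < k.+1) \sum_(0 <= m < (k.+1 - i)%N.+1) G i m =
  \sum_(0 <= i < k.+1) (\sum_(0 <= m < (k - i)%N.+1) G i m + G i (k.+1 - i)%N).
  apply: eq_big_nat => n /andP[_ hn]; rewrite subSn // (big_nat_recr (k-n).+1 0) //.
by rewrite big_split.
Qed.

Theorem corollary4p12 (R : realType) (d N : nat) (h : R) (hpos : 0 < h)
  (rho : 'M[R]_d) (hdiag : is_diag_mx rho)
  (L : 'cV[R]_d * 'cV[R]_d -> R) (hL : forall p, differentiable L p)
  (x : nat -> 'cV[R]_d) (k : nat) (hk1 : (1 <= k)%N) (hk2 : (k < N)%N) :
  D1 L (x k) (x k.+1) + D2 L (x k.-1) (x k)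
    - h *: (rho *m frac_diff (1 / 2) h (frac_diff (1 / 2) h x) k) = 0
  <->
  D1 L (x k) (x k.+1) + D2 L (x k.-1) (x k)
    + f_minus rho (x k) (x k.+1) + f_plus rho (x k.-1) (x k) = 0.
Proof.
have key : frac_diff (1 / 2) h (frac_diff (1 / 2) h x) k = h^-1 *: (x k - x k.-1).
  rewrite /frac_diff.
  set c := h `^ (- (1/2)).
  have -> : \sum_(0 <= n < k.+1) alpha_coef (1/2) n *:
      (c *: \sum_(0 <= n0 < (k - n)%N.+1) alpha_coef (1/2) n0 *: x (k - n - n0)%N) =
    c *: \sum_(0 <= n < k.+1) \sum_(0 <= m < (k - n)%N.+1)
        (alpha_coef (1/2) n * alpha_coef (1/2) m) *: x (k - n - m)%N.
    rewrite scaler_sumr; apply: eq_bigr => n _.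
    rewrite scalerA mulrC -scalerA scaler_sumr; congr (_ *: _).
    apply: eq_bigr => m _; by rewrite scalerA.
  rewrite tri scalerA.
  have -> : c * c = h^-1.
    rewrite /c -powRD; last by rewrite (gt_eqF hpos) implybT.
    have -> : - (1/2) + - (1/2) = -1 :> R by field.
    by rewrite powR_inv1 // ltW.
  congr (_ *: _).
  have -> : \sum_(0 <= j < k.+1) \sum_(0 <= n < j.+1)
      (alpha_coef (1/2) n * alpha_coef (1/2) (j - n)%N) *: x (k - n - (j - n))%N =
    \sum_(0 <= j < k.+1) cc R j *: x (k - j)%N.
    apply: eq_big_nat => j /andP[_ hj]; rewrite /cc scaler_suml.
    apply: eq_big_nat => n /andP[_ hn]; congr (_ *: x _); lia.
  case: k hk1 hk2 => [//|k] _ _.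
  rewrite big_nat_recl // big_nat_recl // big1 ?addr0; last first.
    by move=> i _; rewrite ccS2 scale0r.
  by rewrite cc0 cc1 scale1r scaleN1r subn0 subSS subn0.
rewrite key -scalemxAr scalerA mulfV ?gt_eqF // scale1r /f_minus /f_plus addr0.
by [].
Qed.
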